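(* For every $K>1$ and every $p>q\ge 1$, the space $\ell_p$ admits a $K$-localized weakly bi-Lipschitz embedding into $\ell_q$ with distortion $O_{p/q}(K^{p/q-1})$, where the implied constant depends only on $p/q$.
   Context: Given $K,D>1$, a metric space $(\mathcal{M},d_\mathcal{M})$ admits a $K$-localized weakly bi-Lipschitz embedding into a metric space $(\mathcal{N},d_\mathcal{N})$ with distortion $D$ if for every $\Delta>0$ and every subset $\mathcal{C}\subseteq\mathcal{M}$ with $\operatorname{diam}_\mathcal{M}(\mathcal{C})\le K\Delta$ there is a non-constant Lipschitz function $f:\mathcal{C}\to\mathcal{N}$ such that for all $x,y\in\mathcal{C}$ with $d_\mathcal{M}(x,y)>\Delta$, $d_\mathcal{N}(f(x),f(y))>\frac{\|f\|_{\mathrm{Lip}}}{D}\Delta$, where $\|f\|_{\mathrm{Lip}}$ is the Lipschitz constant of $f$. $\ell_p,\ell_q$ are the sequence spaces with the $\ell_p$, $\ell_q$ norms. *)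

(* Defs.v *)
From HB Require Import structures.
From mathcomp Require Import all_boot all_order all_algebra.
From mathcomp Require Import all_classical all_reals all_analysis.
Set Implicit Arguments. Unset Strict Implicit. Unset Printing Implicit Defensive.
Import Order.TTheory GRing.Theory Num.Theory.
Import numFieldNormedType.Exports.
Local Open Scope classical_set_scope.
Local Open Scope ring_scope.

Definition lp_summable (R : realType) (p : R) (x : nat -> R) : Prop :=
  cvgn (series (fun n => `|x n| `^ p)).

Definition lp (R : realType) (p : R) : Type := {x : nat -> R | lp_summable p x}.

Definition lp_norm (R : realType) (p : R) (x : nat -> R) : R :=
  (limn (series (fun n => `|x n| `^ p))) `^ p^-1.

Definition lp_dist (R : realType) (p : R) (x y : lp p) : R :=
  lp_norm p (fun n => proj1_sig x n - proj1_sig y n).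

Definition lipschitz_on (R : realType) (M N : Type) (dM : M -> M -> R)
  (dN : N -> N -> R) (C : set M) (f : M -> N) : Prop :=
  exists L : R, forall x y, C x -> C y -> dN (f x) (f y) <= L * dM x y.

Definition lip_norm (R : realType) (M N : Type) (dM : M -> M -> R)
  (dN : N -> N -> R) (C : set M) (f : M -> N) : R :=
  sup [set r : R | exists x y, [/\ C x, C y, x <> y & r = dN (f x) (f y) / dM x y]].

Definition diam_le (R : realType) (M : Type) (dM : M -> M -> R) (C : set M) (r : R)
  : Prop := forall x y, C x -> C y -> dM x y <= r.

Definition nonconstant_on (M N : Type) (C : set M) (f : M -> N) : Prop :=
  exists x y, C x /\ C y /\ f x <> f y.

Definition localized_weakly_biLipschitz (R : realType) (M N : Type)
  (dM : M -> M -> R) (dN : N -> N -> R) (K D : R) : Prop :=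
  forall (Delta : R) (C : set M), 0 < Delta ->
    (exists a b, C a /\ C b /\ a <> b) ->
    diam_le dM C (K * Delta) ->
    exists f : M -> N,
      lipschitz_on dM dN C f /\ nonconstant_on C f /\
      forall x y, C x -> C y -> dM x y > Delta ->
        dN (f x) (f y) > lip_norm dM dN C f / D * Delta.

(* Main.v *)
Require Import Defs.
From HB Require Import structures.
From mathcomp Require Import all_boot all_order all_algebra.
From mathcomp Require Import all_classical all_reals all_analysis.
From mathcomp Require Import ring lra.
Import Order.TTheory GRing.Theory Num.Theory.
Import numFieldNormedType.Exports.
Local Open Scope ring_scope.

Set Implicit Arguments. Unset Strict Implicit.
Section Real.
Variable R : realType.
Implicit Types a b r s : R.

Lemma superadd r a b : 1 <= r -> 0 <= a -> 0 <= b -> a `^ r + b `^ r <= (a + b) `^ r.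
Proof.
move=> r1 a0 b0; have r0 : 0 < r by apply: lt_le_trans r1.
have ab0 : 0 <= a + b by rewrite addr_ge0.
rewrite -(mulr_powRB1 a0 r0) -(mulr_powRB1 b0 r0) -(mulr_powRB1 ab0 r0) mulrDl.
have r10 : 0 <= r - 1 by rewrite subr_ge0.
rewrite lerD // ler_wpM2l // ge0_ler_powR // ?nnegrE // ?lerDl ?lerDr //.
Qed.

Lemma powR_sum2 s a b : 0 <= s -> 0 <= a -> 0 <= b ->
  (a + b) `^ s <= 2 `^ s * (a `^ s + b `^ s).
Proof.
move=> s0 a0 b0; wlog ab : a b a0 b0 / b <= a.
  move=> H; case: (leP b a) => ba; first exact: H.
  by rewrite addrC [a `^ s + _]addrC; apply: H => //; apply: ltW.
have : a + b <= 2 * a by rewrite mulr2n mulrDl mul1r lerD2l.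
move=> H; have H2 := ge0_ler_powR s0 (addr_ge0 a0 b0) (mulr_ge0 (ler0n _ 2) a0) H.
apply: (le_trans H2).
rewrite powRM // ler_wpM2l ?powR_ge0 // lerDl powR_ge0 //.
Qed.

Lemma same_up r a b : 1 < r -> 0 <= b -> b <= a ->
  a `^ r - b `^ r <= r * (a - b) * (a + b) `^ (r - 1).
Proof.
move=> r1 b0 ba; have a0 : 0 <= a by apply: le_trans ba.
have r0 : 0 < r by apply: lt_trans r1.
have r10 : 0 < r - 1 by rewrite subr_gt0.
set r' := r / (r - 1).
have r'0 : 0 < r' by rewrite divr_gt0.
have rr : r^-1 + r'^-1 = 1.
  rewrite /r' invf_div; field; exact: lt0r_neq0.
have Y := conjugate_powR b0 (powR_ge0 a (r - 1)) r0 r'0 rr.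
have e1 : (a `^ (r - 1)) `^ r' = a `^ r.
  by rewrite -powRrM /r' mulrCA mulfV ?mulr1 //; exact: lt0r_neq0.
rewrite e1 in Y.
have Y2 : r * (b * a `^ (r - 1)) <= b `^ r + (r - 1) * a `^ r.
  have E : b `^ r / r + a `^ r / r' = (b `^ r + (r - 1) * a `^ r) / r.
    rewrite /r'; field; apply/andP; split; exact: lt0r_neq0.
  rewrite E ler_pdivlMr // mulrC in Y; exact: Y.
have e2 : a `^ r = a * a `^ (r - 1) by rewrite mulr_powRB1.
apply: (@le_trans _ _ (r * (a - b) * a `^ (r - 1))).
  have -> : r * (a - b) * a `^ (r - 1) = r * (a * a `^ (r - 1)) - r * (b * a `^ (r - 1)) by ring.
  rewrite -e2; lra.
rewrite ler_wpM2l ?mulr_ge0 ?subr_ge0 ?(ltW r0) //.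
rewrite ge0_ler_powR ?nnegrE ?(ltW r10) ?addr_ge0 // lerDl //.
Qed.

Definition g r t := if 0 <= t then t `^ r else - ((- t) `^ r).

Lemma g_norm r t : `|g r t| = `|t| `^ r.
Proof.
rewrite /g; case: ifP => t0.
  by rewrite ger0_norm ?powR_ge0 // ger0_norm.
by rewrite normrN ger0_norm ?powR_ge0 // ltr0_norm // ltNge t0.
Qed.

Lemma two_powR_ge1 r : 0 <= r -> 1 <= 2 `^ r :> R.
Proof.
move=> r0; have h2 : 1 <= 2 :> R by lra.
by have := ler_powR h2 r0; rewrite powRr0.
Qed.

Lemma g_case r a b : 1 < r -> 0 <= b -> b <= a ->
  (a - b) `^ r <= 2 `^ r * (a `^ r - b `^ r) /\
  a `^ r - b `^ r <= r * (a - b) * (a + b) `^ (r - 1).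
Proof.
move=> r1 b0 ba; split; last exact: same_up.
have r0 : 0 <= r by apply: ltW; apply: lt_trans r1.
have ab0 : 0 <= a - b by rewrite subr_ge0.
have h := superadd (ltW r1) ab0 b0.
rewrite subrK in h.
apply: (@le_trans _ _ (a `^ r - b `^ r)); first by rewrite lerBrDr.
rewrite ler_peMl ?two_powR_ge1 // subr_ge0 ge0_ler_powR ?nnegrE //.
exact: le_trans ba.
Qed.

Lemma g_opp r a b : 1 < r -> 0 <= a -> 0 <= b ->
  (a + b) `^ r <= 2 `^ r * (a `^ r + b `^ r) /\
  a `^ r + b `^ r <= r * (a + b) * (a + b) `^ (r - 1).
Proof.
move=> r1 a0 b0; have r0 : 0 < r by apply: lt_trans r1.
split; first exact: powR_sum2 (ltW r0) a0 b0.
apply: (le_trans (superadd (ltW r1) a0 b0)).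
rewrite -mulrA mulr_powRB1 ?addr_ge0 //.
rewrite ler_peMl ?powR_ge0 //; exact: ltW.
Qed.

Lemma g_bounds r u v : 1 < r ->
  `|u - v| `^ r <= 2 `^ r * `|g r u - g r v| /\
  `|g r u - g r v| <= r * `|u - v| * (`|u| + `|v|) `^ (r - 1).
Proof.
move=> r1; wlog vu : u v / v <= u.
  move=> H; case: (leP v u) => vu; first exact: H.
  rewrite (distrC u v) (distrC (g r u)) (addrC `|u|); apply: H; exact: ltW.
have r0 : 0 < r by apply: lt_trans r1.
rewrite [`|u - v|]ger0_norm ?subr_ge0 //.
case: (leP 0 v) => v0.
  have u0 : 0 <= u by apply: le_trans vu.
  rewrite /g u0 v0 ger0_norm ?subr_ge0 ?ge0_ler_powR ?nnegrE ?(ltW r0) //.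
  by rewrite (ger0_norm u0) (ger0_norm v0); apply: g_case.
case: (leP 0 u) => u0.
  have nv : (0 <= v) = false by rewrite leNgt v0.
  rewrite /g u0 nv opprK ger0_norm ?addr_ge0 ?powR_ge0 //.
  rewrite (ger0_norm u0) (ltr0_norm v0).
  by apply: g_opp => //; rewrite oppr_ge0 ltW.
have nv : (0 <= v) = false by rewrite leNgt v0.
have nu : (0 <= u) = false by rewrite leNgt u0.
rewrite /g nu nv opprK [- _ + _]addrC.
rewrite ger0_norm; last first.
  rewrite subr_ge0 ge0_ler_powR ?nnegrE ?oppr_ge0 ?(ltW r0) ?(ltW u0) ?(ltW v0) // lerN2 //.
rewrite (ltr0_norm u0) (ltr0_norm v0) addrC.
have -> : u - v = - v - - u by rewrite opprK addrC.
rewrite (addrC (- (- u) `^ r)) (addrC (- u)).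
apply: g_case => //; first by rewrite oppr_ge0 ltW.
by rewrite lerN2.
Qed.

Lemma young_max r a c : 1 < r -> 0 <= a -> 0 <= c ->
  a * c `^ (r - 1) <= a `^ r + c `^ r.
Proof.
move=> r1 a0 c0; have r0 : 0 < r by apply: lt_trans r1.
have r10 : 0 <= r - 1 by rewrite subr_ge0 ltW.
case: (leP a c) => ac.
  apply: (@le_trans _ _ (c `^ r)); last by rewrite lerDr powR_ge0.
  rewrite -(mulr_powRB1 c0 r0) ler_wpM2r ?powR_ge0 //.
apply: (@le_trans _ _ (a `^ r)); last by rewrite lerDl powR_ge0.
rewrite -(mulr_powRB1 a0 r0) ler_wpM2l // ge0_ler_powR ?nnegrE // ltW //.
Qed.

Lemma powR_invV s (T : R) : 0 <= T -> (T^-1) `^ s = (T `^ s)^-1.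
Proof. by move=> T0; rewrite -(powR_inv1 T0) -powRrM mulN1r powRN. Qed.

Lemma le0_eps (S M : R) : (forall e, 0 < e -> S <= M * e) -> 0 <= M -> S <= 0.
Proof.
move=> H M0; case: (leP S 0) => // S0.
have e0 : 0 < S / (M + 1) by rewrite divr_gt0 // ltr_pwDr.
have := H _ e0; rewrite mulrA ler_pdivlMr ?ltr_pwDr // => h; nra.
Qed.

Lemma opt r (S d T c0 : R) : 1 < r -> 0 <= S -> 0 <= d -> 0 < T -> 0 <= c0 ->
  (forall e, 0 < e -> e `^ (r - 1) * S <= c0 * (d `^ r + e `^ r * (2 * T `^ r))) ->
  S <= 3 * c0 * d * T `^ (r - 1).
Proof.
move=> r1 S0 d0 T0 c00 H; have r0 : 0 < r by apply: lt_trans r1.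
have r10 : 0 < r - 1 by rewrite subr_gt0.
have T1 : 0 <= T `^ (r - 1) by rewrite powR_ge0.
case: (leP d 0) => dl0.
  have d00 : d = 0 by apply/eqP; rewrite eq_le dl0 d0.
  subst d.
  apply: (@le_trans _ _ 0); last by rewrite !mulr0 mul0r.
  apply: (@le0_eps _ (c0 * (2 * T `^ r))) => [e e0|]; last first.
    by rewrite mulr_ge0 // mulr_ge0 // powR_ge0.
  have := H e e0; rewrite powR0 ?(gt_eqF r0) // add0r.
  have ee : e `^ r = e `^ (r - 1) * e by rewrite mulrC mulr_powRB1 // ltW.
  move=> h; have Ep : 0 < e `^ (r - 1) by rewrite powR_gt0.
  rewrite -(ler_pM2l Ep); apply: (le_trans h); rewrite ee le_eqVlt; apply/orP; left; apply/eqP; ring.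
have e0 : 0 < d / T by rewrite divr_gt0.
have := H _ e0.
have dT0 : 0 <= T^-1 by rewrite invr_ge0 ltW.
rewrite !(powRM _ d0 dT0) !powR_invV ?(ltW T0) //.
have Tr : 0 < T `^ r by rewrite powR_gt0.
have Tr1 : 0 < T `^ (r - 1) by rewrite powR_gt0.
have dr1 : 0 < d `^ (r - 1) by rewrite powR_gt0.
have E : d `^ r * (T `^ r)^-1 * (2 * T `^ r) = 2 * d `^ r.
  by field; rewrite gt_eqF.
rewrite E.
have Ed : d `^ r = d * d `^ (r - 1) by rewrite mulr_powRB1 // ltW.
rewrite Ed => h.
have h2 : S <= c0 * (d * d `^ (r - 1) + 2 * (d * d `^ (r - 1))) * T `^ (r - 1) / d `^ (r - 1).
  rewrite ler_pdivlMr //.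
  have := ler_wpM2r (ltW Tr1) h.
  have -> : d `^ (r - 1) / T `^ (r - 1) * S * T `^ (r - 1) = S * d `^ (r - 1).
    by field; rewrite gt_eqF.
  by [].
apply: (le_trans h2); rewrite le_eqVlt; apply/orP; left; apply/eqP.
by field; rewrite gt_eqF.
Qed.
End Real.


Set Implicit Arguments. Unset Strict Implicit.
Section Seq.
Variable R : realType.

Definition Sp (s : R) (w : nat -> R) := limn (series (fun n => `|w n| `^ s)).

Lemma Sp_ge0 (s : R) (w : nat -> R) : lp_summable s w -> 0 <= Sp s w.
Proof.
move=> h; apply: (limr_ge h); near=> n.
by rewrite /series /=; apply: sumr_ge0 => i _; apply: powR_ge0.
Unshelve. all: by end_near.
Qed.

Lemma summ_sub (s : R) (x y : nat -> R) : 0 <= s -> lp_summable s x -> lp_summable s y ->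
  lp_summable s (fun n => x n - y n).
Proof.
move=> s0 hx hy.
have E : (fun n => 2 `^ s * (`|x n| `^ s + `|y n| `^ s)) =
  2 `^ s *: ((fun n => `|x n| `^ s) + (fun n => `|y n| `^ s)).
  by apply/funext => n.
apply: (@series_le_cvg _ _ (fun n => 2 `^ s * (`|x n| `^ s + `|y n| `^ s))).
- by move=> n; apply: powR_ge0.
- by move=> n; rewrite mulr_ge0 ?addr_ge0 ?powR_ge0.
- move=> n; apply: (le_trans _ (@powR_sum2 R s `|x n| `|y n| s0 (normr_ge0 _) (normr_ge0 _))).
  by rewrite ge0_ler_powR ?nnegrE ?addr_ge0 ?ler_normB.
- rewrite E; apply: is_cvg_seriesZ; exact: is_cvg_seriesD.
Qed.

Lemma g_powq (r q t : R) : `|g r t| `^ q = `|t| `^ (r * q).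
Proof. by rewrite g_norm powRrM. Qed.

Lemma g_summ (r q : R) (u : nat -> R) : lp_summable (r * q) u ->
  lp_summable q (fun n => g r (u n)).
Proof.
by move=> h; rewrite /lp_summable (_ : (fun n => _) = (fun n => `|u n| `^ (r * q))) //;
  apply/funext => n; rewrite g_powq.
Qed.

Lemma term_lower (r q u v : R) : 1 < r -> 1 <= q ->
  `|u - v| `^ (r * q) <= 2 `^ (r * q) * `|g r u - g r v| `^ q.
Proof.
move=> r1 q1; have q0 : 0 <= q by apply: le_trans q1.
have [h _] := g_bounds u v r1.
rewrite powRrM powRrM -powRM ?powR_ge0 //.
by rewrite ge0_ler_powR ?nnegrE ?powR_ge0 ?mulr_ge0 ?powR_ge0.
Qed.

Lemma term_upper (r q u v e : R) : 1 < r -> 1 <= q -> 0 < e ->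
  e `^ (r - 1) * `|g r u - g r v| `^ q <=
  r `^ q * (`|u - v| `^ (r * q) +
     e `^ r * 2 `^ (r * q) * (`|u| `^ (r * q) + `|v| `^ (r * q))).
Proof.
move=> r1 q1 e0; have q0 : 0 <= q by apply: le_trans q1.
have r0 : 0 < r by apply: lt_trans r1.
have [_ h] := g_bounds u v r1.
have uv0 : 0 <= `|u| + `|v| by rewrite addr_ge0.
have h1 : `|g r u - g r v| `^ q <= (r * `|u - v| * (`|u| + `|v|) `^ (r - 1)) `^ q.
  by rewrite ge0_ler_powR ?nnegrE ?mulr_ge0 ?powR_ge0 ?(ltW r0).
apply: (le_trans (ler_wpM2l (powR_ge0 _ _) h1)).
have a0 : 0 <= `|u - v| `^ q by apply: powR_ge0.
have b0 : 0 <= (`|u| + `|v|) `^ q by apply: powR_ge0.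
have h2 : (r * `|u - v| * (`|u| + `|v|) `^ (r - 1)) `^ q =
    r `^ q * (`|u - v| `^ q * ((`|u| + `|v|) `^ q) `^ (r - 1)).
  rewrite (@powRM _ (r * `|u - v|) _ q (mulr_ge0 (ltW r0) (normr_ge0 _)) (powR_ge0 _ _)).
  rewrite (@powRM _ r _ q (ltW r0) (normr_ge0 _)).
  by rewrite (@powRAC _ (`|u| + `|v|) (r - 1) q) mulrA.
rewrite h2.
have h3 : e `^ (r - 1) * (r `^ q * (`|u - v| `^ q * ((`|u| + `|v|) `^ q) `^ (r - 1))) =
    r `^ q * (`|u - v| `^ q * (e * (`|u| + `|v|) `^ q) `^ (r - 1)).
  rewrite (@powRM _ e _ (r - 1) (ltW e0) b0).
  by rewrite mulrCA; congr (_ * _); rewrite mulrCA.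
rewrite h3 (ler_wpM2l (powR_ge0 _ _)) //.
have h4 := young_max r1 a0 (mulr_ge0 (ltW e0) b0).
apply: (le_trans h4).
have h5 : (`|u - v| `^ q) `^ r = `|u - v| `^ (r * q).
  by rewrite powRAC -powRrM.
have h6 : (e * (`|u| + `|v|) `^ q) `^ r = e `^ r * (`|u| + `|v|) `^ (r * q).
  by rewrite (@powRM _ e _ r (ltW e0) b0) powRAC -powRrM.
rewrite h5 h6 (lerD2l (`|u - v| `^ (r * q))) -mulrA (ler_wpM2l (powR_ge0 _ _)) //.
exact: (powR_sum2 (mulr_ge0 (ltW r0) q0) (normr_ge0 u) (normr_ge0 v)).
Qed.

Lemma limZ' (f : nat -> R) (k : R) : cvgn (series f) ->
  limn (series (fun n => k * f n)) = k * limn (series f).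
Proof. move=> h; exact: (lim_seriesZ k h). Qed.

Lemma cvgZ' (f : nat -> R) (k : R) : cvgn (series f) ->
  cvgn (series (fun n => k * f n)).
Proof. move=> h; exact: (is_cvg_seriesZ (k:=k) h). Qed.

Lemma limD' (f h : nat -> R) : cvgn (series f) -> cvgn (series h) ->
  limn (series (fun n => f n + h n)) = limn (series f) + limn (series h).
Proof. move=> a b; exact: (lim_seriesD a b). Qed.

Lemma cvgD' (f h : nat -> R) : cvgn (series f) -> cvgn (series h) ->
  cvgn (series (fun n => f n + h n)).
Proof. move=> a b; exact: (is_cvg_seriesD a b). Qed.

Lemma lim_le_comb (f a u v : nat -> R) (m k c : R) :
  cvgn (series f) -> cvgn (series a) -> cvgn (series u) -> cvgn (series v) ->
  (forall n, m * f n <= k * (a n + c * (u n + v n))) ->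
  m * limn (series f) <= k * (limn (series a) + c * (limn (series u) + limn (series v))).
Proof.
move=> cf ca cu cv H.
have cuv := cvgD' cu cv.
have ccuv := cvgZ' (k:=c) cuv.
have cs := cvgD' ca ccuv.
rewrite -(limD' cu cv) -(limZ' c cuv) -(limD' ca ccuv) -(limZ' k cs).
rewrite -(limZ' m cf).
apply: lim_series_le; [exact: cvgZ'|exact: cvgZ'|].
move=> n; exact: H.
Qed.

Lemma lim_le_scale (f h : nat -> R) (k : R) :
  cvgn (series f) -> cvgn (series h) -> (forall n, f n <= k * h n) ->
  limn (series f) <= k * limn (series h).
Proof.
move=> cf ch H; rewrite -(limZ' k ch).
apply: lim_series_le; [exact: cf|exact: cvgZ'|].
move=> n; exact: H.
Qed.

Lemma sum_lower (r q : R) (x y a : nat -> R) : 1 < r -> 1 <= q ->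
  lp_summable (r * q) x -> lp_summable (r * q) y -> lp_summable (r * q) a ->
  Sp (r * q) (fun n => x n - y n) <=
  2 `^ (r * q) * Sp q (fun n => g r (x n - a n) - g r (y n - a n)).
Proof.
move=> r1 q1 hx hy ha.
have r0 : 0 < r by apply: lt_trans r1.
have q0 : 0 <= q by apply: le_trans q1.
have p0 : 0 <= r * q by rewrite mulr_ge0 // ltW.
apply: lim_le_scale.
- exact: summ_sub.
- exact: (summ_sub q0 (g_summ (summ_sub p0 hx ha)) (g_summ (summ_sub p0 hy ha))).
move=> n; have -> : x n - y n = (x n - a n) - (y n - a n) by ring.
exact: term_lower.
Qed.

Lemma sum_upper (r q : R) (x y a : nat -> R) (e : R) : 1 < r -> 1 <= q -> 0 < e ->
  lp_summable (r * q) x -> lp_summable (r * q) y -> lp_summable (r * q) a ->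
  e `^ (r - 1) * Sp q (fun n => g r (x n - a n) - g r (y n - a n)) <=
  r `^ q * (Sp (r * q) (fun n => x n - y n) +
    e `^ r * 2 `^ (r * q) * (Sp (r * q) (fun n => x n - a n) + Sp (r * q) (fun n => y n - a n))).
Proof.
move=> r1 q1 e0 hx hy ha.
have r0 : 0 < r by apply: lt_trans r1.
have q0 : 0 <= q by apply: le_trans q1.
have p0 : 0 <= r * q by rewrite mulr_ge0 // ltW.
apply: lim_le_comb.
- exact: (summ_sub q0 (g_summ (summ_sub p0 hx ha)) (g_summ (summ_sub p0 hy ha))).
- exact: summ_sub.
- exact: summ_sub.
- exact: summ_sub.
move=> n; have -> : x n - y n = (x n - a n) - (y n - a n) by ring.
exact: term_upper.
Qed.
End Seq.

Set Implicit Arguments. Unset Strict Implicit.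

Section Fin.
Variable R : realType.

Lemma powR_invK (s X : R) : 0 < s -> 0 <= X -> (X `^ s^-1) `^ s = X.
Proof.
move=> s0 X0; rewrite -powRrM mulVf ?powRr1 //; exact: lt0r_neq0.
Qed.

Lemma powRK' (s X : R) : 0 < s -> 0 <= X -> (X `^ s) `^ s^-1 = X.
Proof.
move=> s0 X0; rewrite -powRrM mulfV ?powRr1 //; exact: lt0r_neq0.
Qed.

Lemma lower_final (r q : R) (x y a : nat -> R) : 1 < r -> 1 <= q ->
  lp_summable (r * q) x -> lp_summable (r * q) y -> lp_summable (r * q) a ->
  (Sp (r * q) (fun n => x n - y n) `^ (r * q)^-1) `^ r <=
  2 `^ r * Sp q (fun n => g r (x n - a n) - g r (y n - a n)) `^ q^-1.
Proof.
move=> r1 q1 hx hy ha.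
have r0 : 0 < r by apply: lt_trans r1.
have q0 : 0 < q by apply: lt_le_trans q1.
have p0 : 0 <= r * q by rewrite mulr_ge0 // ltW.
have h := sum_lower r1 q1 hx hy ha.
have hA := Sp_ge0 (summ_sub p0 hx hy).
have hS := Sp_ge0 (summ_sub (ltW q0) (g_summ (summ_sub p0 hx ha)) (g_summ (summ_sub p0 hy ha))).
have qi : 0 < q^-1 by rewrite invr_gt0.
have h1 := ge0_ler_powR (ltW qi) hA (mulr_ge0 (powR_ge0 _ _) hS) h.
rewrite -powRrM.
have -> : (r * q)^-1 * r = q^-1.
  by field; apply/andP; split; exact: lt0r_neq0.
apply: (le_trans h1).
rewrite powRM ?powR_ge0 // -powRrM.
have -> : r * q * q^-1 = r by field; exact: lt0r_neq0.
by [].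
Qed.

Lemma upper_final (r q K Dl : R) (x y a : nat -> R) : 1 < r -> 1 <= q -> 0 < K -> 0 < Dl ->
  lp_summable (r * q) x -> lp_summable (r * q) y -> lp_summable (r * q) a ->
  Sp (r * q) (fun n => x n - a n) `^ (r * q)^-1 <= K * Dl ->
  Sp (r * q) (fun n => y n - a n) `^ (r * q)^-1 <= K * Dl ->
  Sp q (fun n => g r (x n - a n) - g r (y n - a n)) `^ q^-1 <=
  3 * r * (2 * K * Dl) `^ (r - 1) * Sp (r * q) (fun n => x n - y n) `^ (r * q)^-1.
Proof.
move=> r1 q1 K0 D0 hx hy ha hU hV.
have r0 : 0 < r by apply: lt_trans r1.
have q0 : 0 < q by apply: lt_le_trans q1.
have pp : 0 < r * q by rewrite mulr_gt0.
have p0 : 0 <= r * q by rewrite ltW.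
have KD0 : 0 < K * Dl by rewrite mulr_gt0.
set A := Sp (r * q) (fun n => x n - y n).
set U := Sp (r * q) (fun n => x n - a n).
set V := Sp (r * q) (fun n => y n - a n).
set S := Sp q (fun n => g r (x n - a n) - g r (y n - a n)).
have hA : 0 <= A := Sp_ge0 (summ_sub p0 hx hy).
have hU0 : 0 <= U := Sp_ge0 (summ_sub p0 hx ha).
have hV0 : 0 <= V := Sp_ge0 (summ_sub p0 hy ha).
have hS : 0 <= S := Sp_ge0 (summ_sub (ltW q0) (g_summ (summ_sub p0 hx ha)) (g_summ (summ_sub p0 hy ha))).
have Ub : U <= (K * Dl) `^ (r * q).
  have := ge0_ler_powR (ltW pp) (powR_ge0 U (r * q)^-1) (ltW KD0) hU.
  by rewrite powR_invK.
have Vb : V <= (K * Dl) `^ (r * q).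
  have := ge0_ler_powR (ltW pp) (powR_ge0 V (r * q)^-1) (ltW KD0) hV.
  by rewrite powR_invK.
set d := A `^ (r * q)^-1.
have d0 : 0 <= d by apply: powR_ge0.
set T := (2 * K * Dl) `^ q.
have T0 : 0 < T by rewrite powR_gt0 // mulr_gt0 // mulr_gt0.
have Ad : A = (d `^ q) `^ r.
  rewrite /d -!powRrM.
  have -> : (r * q)^-1 * (q * r) = 1 by field; apply/andP; split; exact: lt0r_neq0.
  by rewrite powRr1.
have Tr : T `^ r = 2 `^ (r * q) * (K * Dl) `^ (r * q).
  by rewrite /T -powRrM (mulrC q r) -mulrA powRM ?ler0n ?ltW.
have key : S <= 3 * r `^ q * d `^ q * T `^ (r - 1).
  apply: opt => //; rewrite ?powR_ge0 //.
  move=> e e0; apply: (le_trans (sum_upper r1 q1 e0 hx hy ha)).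
  rewrite -/A -/U -/V -/S -Ad ler_wpM2l ?powR_ge0 // lerD2l Tr.
  have UV : U + V <= (K * Dl) `^ (r * q) + (K * Dl) `^ (r * q) := lerD Ub Vb.
  have e2 : 0 <= e `^ r * 2 `^ (r * q) by rewrite mulr_ge0 ?powR_ge0.
  apply: (le_trans (ler_wpM2l e2 UV)); rewrite le_eqVlt; apply/orP; left; apply/eqP; ring.
have B0 : 0 <= 2 * K * Dl by rewrite mulr_ge0 ?mulr_ge0 ?ltW.
have r0' : 0 <= r := ltW r0.
have Y0 : 0 <= r * d * (2 * K * Dl) `^ (r - 1) by rewrite mulr_ge0 ?mulr_ge0 ?powR_ge0.
have E : 3 * r `^ q * d `^ q * T `^ (r - 1) = 3 * (r * d * (2 * K * Dl) `^ (r - 1)) `^ q.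
  rewrite (powRM q (mulr_ge0 r0' d0) (powR_ge0 _ _)) (powRM q r0' d0).
  by rewrite /T powRAC !mulrA.
have qi : 0 < q^-1 by rewrite invr_gt0.
have k2 := ge0_ler_powR (ltW qi) hS (mulr_ge0 (mulr_ge0 (mulr_ge0 (ler0n _ 3) (powR_ge0 _ _)) (powR_ge0 _ _)) (powR_ge0 _ _)) key.
rewrite E (powRM _ (ler0n _ 3) (powR_ge0 _ _)) (powRK' q0 Y0) in k2.
apply: (le_trans k2).
have h3 : 3 `^ q^-1 <= 3 :> R.
  apply: ler1_powR; first by rewrite ler1n.
  by rewrite invf_le1.
apply: (le_trans (ler_wpM2r Y0 h3)); rewrite le_eqVlt; apply/orP; left; apply/eqP; ring.
Qed.
End Fin.

Unset Implicit Arguments. Set Strict Implicit.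

Lemma final_alg (R : realType) (r K Dl : R) : 1 < r -> 0 < K -> 0 < Dl ->
  2 `^ r * ((3 * r * (2 * K * Dl) `^ (r - 1)) / (3 * r * 2 `^ r * 2 `^ r * K `^ (r - 1)) * Dl)
  <= Dl `^ r.
Proof.
move=> r1 K0 D0.
have r0 : 0 < r by apply: lt_trans r1.
have P0 : 0 < 2 `^ (r - 1) :> R by rewrite powR_gt0.
have Kr0 : 0 < K `^ (r - 1) by rewrite powR_gt0.
have Dr0 : 0 < Dl `^ (r - 1) by rewrite powR_gt0.
rewrite (powRM _ (mulr_ge0 (ler0n _ 2) (ltW K0)) (ltW D0)) (powRM _ (ler0n _ 2) (ltW K0)).
rewrite -(mulr_powRB1 (ler0n R 2) r0) -(mulr_powRB1 (ltW D0) r0).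
set P := 2 `^ (r - 1); set Kr := K `^ (r - 1); set Dr := Dl `^ (r - 1).
have -> : 2 * P * (3 * r * (P * Kr * Dr) / (3 * r * (2 * P) * (2 * P) * Kr) * Dl)
   = (Dl * Dr) / 2.
  field; rewrite !gt_eqF //.
rewrite ler_pdivrMr //; rewrite ler_peMr //; first by rewrite mulr_ge0 ?ltW.
lra.
Qed.

Lemma lp_eq (R : realType) (p : R) (a b : lp p) :
  (forall n, proj1_sig a n = proj1_sig b n) -> a = b.
Proof.
case: a b => [fa ha] [fb hb] /= H.
have E : fa = fb by apply/funext.
subst fb; congr exist; exact: Prop_irrelevance.
Qed.

Theorem lemma18 (R : realType) :
  forall r : R, 1 < r ->
  exists c : R, 0 < c /\
    forall (K p q : R), 1 < K -> 1 <= q -> p = r * q ->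
      exists D : R, 1 < D /\ D <= c * K `^ (r - 1) /\
        localized_weakly_biLipschitz (@lp_dist R p) (@lp_dist R q) K D.
Proof.
move=> r r1.
have r0 : 0 < r by apply: lt_trans r1.
have tP : 1 <= 2 `^ r :> R by apply: two_powR_ge1; exact: ltW.
have h1 : 1 <= r * 2 `^ r := mulr_ege1 (ltW r1) tP.
have h2 : 1 <= r * 2 `^ r * 2 `^ r := mulr_ege1 h1 tP.
have c3 : 3 <= 3 * r * 2 `^ r * 2 `^ r.
  rewrite -!mulrA -[X in X <= _]mulr1 ler_wpM2l // !mulrA //.
exists (3 * r * 2 `^ r * 2 `^ r); split; first by apply: (lt_le_trans _ c3); lra.
move=> K p q K1 q1 ->.
set c := 3 * r * 2 `^ r * 2 `^ r.
have K0 : 0 < K by apply: lt_trans K1.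
have Kr : 1 <= K `^ (r - 1).
  have := ler_powR (ltW K1) (_ : 0 <= r - 1); rewrite powRr0; apply.
  by rewrite subr_ge0 ltW.
have cK : c <= c * K `^ (r - 1) by rewrite ler_peMr // (le_trans _ c3).
exists (c * K `^ (r - 1)); split.
  apply: (lt_le_trans _ cK); apply: (lt_le_trans _ c3); lra.
split; first exact: lexx.
move=> Dl C D0 [a [b [Ca [Cb ab]]]] hdiam.
have q0 : 0 < q by apply: lt_le_trans q1.
have p0 : 0 <= r * q by rewrite mulr_ge0 ?ltW.
pose F : lp (r * q) -> lp q := fun x => exist (lp_summable q)
  (fun n => g r (proj1_sig x n - proj1_sig a n))
  (g_summ (summ_sub p0 (proj2_sig x) (proj2_sig a))).
set L := 3 * r * (2 * K * Dl) `^ (r - 1).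
have L0 : 0 <= L by rewrite mulr_ge0 ?mulr_ge0 ?powR_ge0 ?ltW.
have Up : forall x y, C x -> C y -> @lp_dist R q (F x) (F y) <= L * @lp_dist R (r * q) x y.
  move=> x y Cx Cy.
  exact: (upper_final r1 q1 K0 D0 (proj2_sig x) (proj2_sig y) (proj2_sig a)
     (hdiam x a Cx Ca) (hdiam y a Cy Ca)).
have Lo : forall x y, C x -> C y ->
    (@lp_dist R (r * q) x y) `^ r <= 2 `^ r * @lp_dist R q (F x) (F y).
  move=> x y Cx Cy.
  exact: (lower_final r1 q1 (proj2_sig x) (proj2_sig y) (proj2_sig a)).
have lipL : lip_norm (@lp_dist R (r * q)) (@lp_dist R q) C F <= L.
  apply: ge_sup.
    exists (@lp_dist R q (F a) (F b) / @lp_dist R (r * q) a b); exists a, b; split => //.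
  move=> _ [x [y [Cx Cy _ ->]]].
  have dge0 : 0 <= @lp_dist R (r * q) x y by apply: powR_ge0.
  case: (eqVneq (@lp_dist R (r * q) x y) 0) => [->|dn0].
    by rewrite invr0 mulr0.
  have dp : 0 < @lp_dist R (r * q) x y by rewrite lt0r dn0.
  by rewrite ler_pdivrMr // Up.
exists F; split; first by exists L; exact: Up.
split.
  exists a, b; split => //; split => // FE.
  have [n hn] : exists n, proj1_sig a n != proj1_sig b n.
    case: (pselect (exists n, proj1_sig a n != proj1_sig b n)) => [//|hn].
    exfalso; apply: ab; apply: lp_eq => n.
    by apply/eqP/negPn/negP => hne; apply: hn; exists n.
  have := congr1 (fun z : lp q => proj1_sig z n) FE; rewrite /= => E.
  have [hb _] := g_bounds (proj1_sig a n - proj1_sig a n) (proj1_sig b n - proj1_sig a n) r1.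
  rewrite E (subrr (g r (proj1_sig b n - proj1_sig a n))) normr0 mulr0 in hb.
  have h0 : `|(proj1_sig a n - proj1_sig a n) - (proj1_sig b n - proj1_sig a n)| `^ r = 0.
    by apply/eqP; rewrite eq_le hb powR_ge0.
  move/powR_eq0_eq0/eqP: h0; rewrite normr_eq0 subrr sub0r oppr_eq0 subr_eq0 eq_sym.
  by move/negPf: hn => ->.
move=> x y Cx Cy hxy.
have Dp : 0 < c * K `^ (r - 1) by apply: (lt_le_trans _ cK); apply: (lt_le_trans _ c3); lra.
have P0 : 0 < 2 `^ r :> R by rewrite powR_gt0.
rewrite -(ltr_pM2l P0).
have s1 : 2 `^ r * (lip_norm (@lp_dist R (r * q)) (@lp_dist R q) C F / (c * K `^ (r - 1)) * Dl)
    <= 2 `^ r * (L / (c * K `^ (r - 1)) * Dl).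
  rewrite ler_pM2l // ler_pM2r // ler_pM2r ?invr_gt0 //.
apply: (le_lt_trans s1).
rewrite /L /c; apply: (le_lt_trans (@final_alg R r K Dl r1 K0 D0)).
apply: (lt_le_trans _ (Lo x y Cx Cy)).
apply: gt0_ltr_powR => //; rewrite ?nnegrE ?ltW //.
all: first [exact: hxy | exact: (le_trans (ltW D0) (ltW hxy)) | exact: powR_ge0 | idtac].
exact: (lt_trans D0 hxy).
Qed.
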